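(* Let $(q_n),(r_n)$ be complex sequences vanishing faster than any negative power of $|n|$ as $n\to\pm\infty$ with $1-q_nr_n\neq0$ and $1+q_nr_{n+1}\ne0$ for all $n$, and let $D_n,E_n,D_\infty,E_\infty,u_n,v_n,p_n,s_n$ be as in the context. Then at $z=1$ the Jost solutions of system (Q) and of system (U) with potentials $(u,v)$ and $(p,s)$ are $$\begin{bmatrix}\bar\psi_n^{(q,r)}(1)&\psi_n^{(q,r)}(1)\end{bmatrix}=\begin{bmatrix}1&0\\ \sum_{j=n}^\infty r_j&1\end{bmatrix},$$ $$\begin{bmatrix}\bar\psi_n^{(u,v)}(1)&\psi_n^{(u,v)}(1)\end{bmatrix}=\begin{bmatrix}\frac{E_{n-1}}{E_\infty}&\frac{E_{n-1}}{D_\infty}\sum_{j=n}^\infty q_j\\ -r_n\frac{D_{n-1}}{E_\infty}&\frac{D_{n-1}}{D_\infty}\big(1-r_n\sum_{j=n}^\infty q_j\big)\end{bmatrix},$$ $$\begin{bmatrix}\bar\psi_n^{(p,s)}(1)&\psi_n^{(p,s)}(1)\end{bmatrix}=\begin{bmatrix}\frac{E_{n-1}}{E_\infty}\big(1+q_n\sum_{j=n+1}^\infty r_j\big)&q_n\frac{E_{n-1}}{D_\infty}\\ \frac{D_{n}}{E_\infty}\sum_{j=n+1}^\infty r_j&\frac{D_{n}}{D_\infty}\end{bmatrix}.$$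
   Context: System (Q): $\begin{bmatrix}\alpha_n\\ \beta_n\end{bmatrix}=\begin{bmatrix} z & (z-z^{-1})q_n\\ z r_n & z^{-1}+(z-z^{-1})q_nr_n\end{bmatrix}\begin{bmatrix}\alpha_{n+1}\\ \beta_{n+1}\end{bmatrix}$; system (U) with potentials $(a,b)$: $\begin{bmatrix}\xi_n\\ \eta_n\end{bmatrix}=\begin{bmatrix} z & z a_n\\ z^{-1}b_n & z^{-1}\end{bmatrix}\begin{bmatrix}\xi_{n+1}\\ \eta_{n+1}\end{bmatrix}$. $D_n=\prod_{j\le n}(1-q_jr_j)$, $E_n=\prod_{j\le n}(1+q_jr_{j+1})$, $D_\infty=\prod_{j\in\mathbb Z}(1-q_jr_j)$, $E_\infty=\prod_{j\in\mathbb Z}(1+q_jr_{j+1})$; $u_n=q_nE_{n-1}/D_n$, $v_n=(-r_n+r_{n+1}-q_nr_nr_{n+1})D_{n-1}/E_n$, $p_n=(q_n-q_{n+1}-q_nq_{n+1}r_{n+1})E_{n-1}/D_{n+1}$, $s_n=r_{n+1}D_n/E_n$. For $|z|=1$ the Jost solutions $\psi_n$ and $\bar\psi_n$ of each system (overbar not complex conjugation) are the unique solutions with $\psi_n=\begin{bmatrix}o(1)\\ z^n[1+o(1)]\end{bmatrix}$ and $\bar\psi_n=\begin{bmatrix}z^{-n}[1+o(1)]\\ o(1)\end{bmatrix}$ as $n\to+\infty$; $\begin{bmatrix}\bar\psi_n&\psi_n\end{bmatrix}$ is the $2\times2$ matrix with these columns. *)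

(* Defs.v *)
From HB Require Import structures.
From mathcomp Require Import all_boot all_order all_algebra.
From mathcomp Require Import all_classical all_reals all_analysis.
From mathcomp Require Import complex.
Set Implicit Arguments. Unset Strict Implicit. Unset Printing Implicit Defensive.
Import Order.TTheory GRing.Theory Num.Theory.
Import numFieldNormedType.Exports.
Local Open Scope ring_scope.
Local Open Scope complex_scope.
Local Open Scope classical_set_scope.

HB.instance Definition _ (R : realType) := GRing.ComAlgebra.copy R[i] R[i]^o.
HB.instance Definition _ (R : realType) := NormedModule.copy R[i] R[i]^o.

Section Defs.
Variable R : realType.
Notation C := R[i].

Definition rapid_decay (x : int -> C) : Prop :=
  forall k : nat,
    (fun n : nat => (n%:R ^+ k : C) * x (Posz n)) @ \oo --> (0 : C) /\
    (fun n : nat => (n%:R ^+ k : C) * x (- Posz n)) @ \oo --> (0 : C).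

Definition tailsum (x : int -> C) (n : int) : C :=
  lim ((fun N : nat => \sum_(0 <= k < N) x (n + Posz k)) @ \oo).

Definition Dn (q r : int -> C) (n : int) : C :=
  lim ((fun N : nat => \prod_(0 <= k < N) (1 - q (n - Posz k) * r (n - Posz k)))
        @ \oo).
Definition En (q r : int -> C) (n : int) : C :=
  lim ((fun N : nat =>
          \prod_(0 <= k < N) (1 + q (n - Posz k) * r (n - Posz k + 1))) @ \oo).
Definition Dinf (q r : int -> C) : C :=
  lim ((fun N : nat =>
          \prod_(0 <= k < (2 * N).+1) (1 - q (Posz k - Posz N) * r (Posz k - Posz N)))
        @ \oo).
Definition Einf (q r : int -> C) : C :=
  lim ((fun N : nat =>
          \prod_(0 <= k < (2 * N).+1)
             (1 + q (Posz k - Posz N) * r (Posz k - Posz N + 1))) @ \oo).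

Definition u_pot q r (n : int) : C := q n * En q r (n - 1) / Dn q r n.
Definition v_pot q r (n : int) : C :=
  (- r n + r (n + 1) - q n * r n * r (n + 1)) * Dn q r (n - 1) / En q r n.
Definition p_pot q r (n : int) : C :=
  (q n - q (n + 1) - q n * q (n + 1) * r (n + 1)) * En q r (n - 1) / Dn q r (n + 1).
Definition s_pot q r (n : int) : C := r (n + 1) * Dn q r n / En q r n.

Definition mx22 (a b c d : C) : 'M[C]_2 :=
  \matrix_(i < 2, j < 2)
    if (i : nat) == 0%N then (if (j : nat) == 0%N then a else b)
    else (if (j : nat) == 0%N then c else d).
Definition col2 (a b : C) : 'cV[C]_2 :=
  \col_(i < 2) if (i : nat) == 0%N then a else b.
Definition top (v : 'cV[C]_2) : C := v ord0 ord0.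
Definition bot (v : 'cV[C]_2) : C := v ord_max ord0.

Definition Qmat (q r : int -> C) (z : C) (n : int) : 'M[C]_2 :=
  mx22 z ((z - z^-1) * q n) (z * r n) (z^-1 + (z - z^-1) * q n * r n).
Definition Umat (a b : int -> C) (z : C) (n : int) : 'M[C]_2 :=
  mx22 z (z * a n) (z^-1 * b n) z^-1.

Definition solves (M : int -> 'M[C]_2) (psi : int -> 'cV[C]_2) : Prop :=
  forall n : int, psi n = M n *m psi (n + 1).

Definition is_jost_psi (M : int -> 'M[C]_2) (z : C) (psi : int -> 'cV[C]_2) :=
  solves M psi /\
  (fun n : nat => top (psi (Posz n))) @ \oo --> (0 : C) /\
  (fun n : nat => bot (psi (Posz n)) * z ^ (- Posz n)) @ \oo --> (1 : C).
Definition is_jost_psibar (M : int -> 'M[C]_2) (z : C) (psi : int -> 'cV[C]_2) :=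
  solves M psi /\
  (fun n : nat => top (psi (Posz n)) * z ^ (Posz n)) @ \oo --> (1 : C) /\
  (fun n : nat => bot (psi (Posz n))) @ \oo --> (0 : C).

End Defs.

(* Main.v *)
Require Import Defs.
From HB Require Import structures.
From mathcomp Require Import all_boot all_order all_algebra.
From mathcomp Require Import all_classical all_reals all_analysis.
From mathcomp Require Import complex.
From mathcomp Require Import ring lra zify.
Import Order.TTheory GRing.Theory Num.Theory.
Import numFieldNormedType.Exports.
Local Open Scope ring_scope.
Local Open Scope complex_scope.
Local Open Scope classical_set_scope.

Module Aux.
Set Implicit Arguments. Unset Strict Implicit. Unset Printing Implicit Defensive.
Section S.
Variable R : realType.
Notation C := R[i].
Definition nc (x : C) : R := complex.Re `|x|.
Lemma normE (x : C) : `|x| = (nc x)%:C.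
Proof. by rewrite /nc normc_def. Qed.
Lemma nc_ge0 x : 0 <= nc x.
Proof. by have := normr_ge0 x; rewrite normE -[0]/((0:R)%:C) lecR. Qed.
Lemma ncD x y : nc (x + y) <= nc x + nc y.
Proof. by have := ler_normD x y; rewrite !normE -rmorphD lecR. Qed.
Lemma ncM x y : nc (x * y) = nc x * nc y.
Proof. by apply: complexI; rewrite rmorphM -!normE normrM. Qed.
Lemma ncN x : nc (- x) = nc x.
Proof. by rewrite /nc normrN. Qed.
Lemma ncB x y : nc (x - y) = nc (y - x).
Proof. by rewrite /nc distrC. Qed.
Lemma ncV x : nc (x^-1) = (nc x)^-1.
Proof. by apply: complexI; rewrite fmorphV -!normE normfV. Qed.
Lemma nc0 : nc 0 = 0. Proof. by rewrite /nc normr0. Qed.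
Lemma nc1 : nc 1 = 1. Proof. by rewrite /nc normr1. Qed.
Lemma nc_eq0 x : (nc x == 0) = (x == 0).
Proof.
apply/eqP/eqP => [h|->]; last exact: nc0.
by apply/eqP; rewrite -normr_eq0 normE h.
Qed.


Lemma cvgC (u : nat -> C) (l : C) :
  u @ \oo --> l <-> forall e : R, 0 < e -> exists N : nat, forall n, (N <= n)%N -> nc (u n - l) < e.
Proof.
rewrite cvgrPdistC_lt; split.
- move=> H e e0; have := H e%:C; rewrite ltcR => /(_ e0) [N _ HN].
  by exists N => n /HN; rewrite normE ltcR.
- move=> H [a b]; rewrite ltcE /= => /andP[/eqP hb ha].
  have ? : b = 0 by rewrite hb.
  subst b; have [N HN] := H a ha; exists N => // n /HN.
  by rewrite normE complexr0 ltcR.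
Qed.

Lemma nc_nat (n : nat) : nc (n%:R) = n%:R.
Proof. by apply: complexI; rewrite -normE rmorph_nat normr_nat. Qed.
Lemma ncR (a : R) : nc a%:C = `|a|.
Proof. by rewrite /nc normc_def /= expr0n /= addr0 sqrtr_sqr. Qed.
Lemma ncRe (z : C) : `|complex.Re z| <= nc z.
Proof.
case: z => a b; rewrite /nc normc_def /= -sqrtr_sqr.
by apply: ler_wsqrtr; rewrite lerDl sqr_ge0.
Qed.
Lemma ncIm (z : C) : `|complex.Im z| <= nc z.
Proof.
case: z => a b; rewrite /nc normc_def /= -sqrtr_sqr.
by apply: ler_wsqrtr; rewrite lerDr sqr_ge0.
Qed.
Lemma nc_split (a b : R) : nc (a +i* b) <= `|a| + `|b|.
Proof.
have -> : a +i* b = a%:C + b%:C * 'i by apply/eqP; rewrite eq_complex /=; simpc.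
apply: le_trans (ncD _ _) _; rewrite ncM !ncR.
suff -> : nc 'i = 1 by rewrite mulr1.
by rewrite /nc normc_def /= expr0n expr1n /= add0r sqrtr1.
Qed.

Lemma ler_eps (x y : R) : (forall e, 0 < e -> x <= y + e) -> x <= y.
Proof. by move=> h; apply/ler_addgt0Pr. Qed.

Lemma cvg_le (u : nat -> C) l A b : u @ \oo --> l ->
  (exists N, forall n, (N <= n)%N -> nc (u n - A) <= b) -> nc (l - A) <= b.
Proof.
move=> /cvgC hu [N HN]; apply: ler_eps => e e0.
have [M HM] := hu e e0.
have h1 := HN (maxn N M) (leq_maxl _ _).
have h2 := HM (maxn N M) (leq_maxr _ _).
have : l - A = (u (maxn N M) - A) - (u (maxn N M) - l) by ring.
move=> ->; apply: le_trans (ncD _ _) _; rewrite ncN; lra.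
Qed.

Lemma cvg_uniq (u : nat -> C) (l1 l2 : C) : u @ \oo --> l1 -> u @ \oo --> l2 -> l1 = l2.
Proof.
move=> h1 h2; have hs : hausdorff_space C by exact: norm_hausdorff.
by rewrite -(cvg_lim hs h1) (cvg_lim hs h2).
Qed.

Lemma cauchyR (v : nat -> R) : (forall e, 0 < e -> exists N, forall n m, (N <= n)%N -> (N <= m)%N -> `|v n - v m| < e) ->
  exists l : R, v @ \oo --> l.
Proof.
move=> h; have : cvg (v @ \oo).
  apply/cauchy_cvgP; apply/cauchy_exP => e e0.
  have [N HN] := h e e0; exists (v N); exists N => // n /= hn.
  by rewrite /ball /= HN.
by move=> hc; exists (lim (v @ \oo)).
Qed.

Lemma cauchyC (u : nat -> C) : (forall e, 0 < e -> exists N, forall n m, (N <= n)%N -> (N <= m)%N -> nc (u n - u m) < e) ->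
  exists l : C, u @ \oo --> l.
Proof.
move=> h.
have [a ha] : exists a : R, (fun n => complex.Re (u n)) @ \oo --> a.
  apply: cauchyR => e e0; have [N HN] := h e e0; exists N => n m hn hm.
  by apply: le_lt_trans (HN n m hn hm); rewrite -raddfB /=; exact: ncRe.
have [b hb] : exists b : R, (fun n => complex.Im (u n)) @ \oo --> b.
  apply: cauchyR => e e0; have [N HN] := h e e0; exists N => n m hn hm.
  by apply: le_lt_trans (HN n m hn hm); rewrite -raddfB /=; exact: ncIm.
exists (a +i* b); apply/cvgC => e e0.
move/cvgrPdistC_lt : ha => /(_ (e/2)) []; first by lra.
move=> N1 _ HN1.
move/cvgrPdistC_lt : hb => /(_ (e/2)) []; first by lra.
move=> N2 _ HN2.
exists (maxn N1 N2) => n; rewrite geq_max => /andP[h1 h2].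
have := HN1 n h1; have := HN2 n h2 => /= i1 i2.
case E : (u n) => [x y] /=; rewrite E /= in i1 i2.
rewrite -[_ - _]/((x - a) +i* (y - b)).
apply: le_lt_trans (nc_split _ _) _; lra.
Qed.


Definition smallT (c : nat -> R) := forall e : R, 0 < e -> exists N : nat,
  forall n L : nat, (N <= n)%N -> \sum_(k < L) c (n + k)%N <= e.

Lemma smallT_ext c c' : (forall n, c n = c' n) -> smallT c -> smallT c'.
Proof. by move=> h; have -> : c = c' by apply: funext. Qed.

Lemma smallT_le (c c' : nat -> R) (K : R) (N0 : nat) : 0 <= K ->
  (forall n, (N0 <= n)%N -> c' n <= K * c n) -> smallT c -> smallT c'.
Proof.
move=> K0 hle hc e e0.
have K1 : 0 < K + 1 by lra.
have [N HN] := hc (e / (K + 1)) (divr_gt0 e0 K1).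
exists (maxn N N0) => n L; rewrite geq_max => /andP[hN hN0].
apply: le_trans (_ : \sum_(k < L) K * c (n + k)%N <= _).
  by apply: ler_sum => k _; apply: hle; apply: leq_trans hN0 (leq_addr _ _).
rewrite -mulr_sumr; apply: le_trans (ler_wpM2l K0 (HN n L hN)) _.
rewrite mulrA ler_pdivrMr //; nra.
Qed.

Lemma smallT_add c1 c2 : smallT c1 -> smallT c2 -> smallT (fun n => c1 n + c2 n).
Proof.
move=> h1 h2 e e0.
have [N1 H1] := h1 (e / 2) ltac:(lra).
have [N2 H2] := h2 (e / 2) ltac:(lra).
exists (maxn N1 N2) => n L; rewrite geq_max => /andP[n1 n2].
rewrite big_split /=; have := H1 n L n1; have := H2 n L n2; lra.
Qed.

Lemma smallT_shift c m : smallT c -> smallT (fun n => c (n + m)%N).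
Proof.
move=> h e e0; have [N HN] := h e e0; exists N => n L hn.
rewrite (eq_bigr (fun k : 'I_L => c ((n + m) + k)%N)); last by move=> k _; rewrite addnAC.
by apply: HN; apply: leq_trans hn (leq_addr _ _).
Qed.

Lemma smallT_pt c : smallT c -> forall e, 0 < e -> exists N, forall n, (N <= n)%N -> c n <= e.
Proof.
move=> h e e0; have [N HN] := h e e0; exists N => n hn.
by have := HN n 1%N hn; rewrite big_ord1 addn0.
Qed.

Definition summP (x : int -> C) := smallT (fun n : nat => nc (x (Posz n))).

Lemma summP_trans x : summP x -> forall n : int, smallT (fun k : nat => nc (x (n + Posz k))).
Proof.
move=> hx n e e0; have [N HN] := hx e e0.
case: n => [a|b].
- exists N => m L hm.
  rewrite (eq_bigr (fun k : 'I_L => nc (x (Posz ((a + m) + k)%N)))).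
    by apply: HN; apply: leq_trans hm (leq_addl _ _).
  by move=> k _; congr (nc (x _)); lia.
- exists (N + b.+1)%N => m L hm.
  rewrite (eq_bigr (fun k : 'I_L => nc (x (Posz ((m - b.+1) + k)%N)))).
    by apply: HN; lia.
  by move=> k _; congr (nc (x _)); lia.
Qed.

Lemma summP_cvg0 x : summP x -> (fun n : nat => x (Posz n)) @ \oo --> (0 : C).
Proof.
move=> /smallT_pt h; apply/cvgC => e e0.
have [N HN] := h (e / 2) ltac:(lra); exists N => n /HN.
rewrite subr0; lra.
Qed.

Definition evbnd (y : int -> C) := exists K : R, exists N : nat,
  forall n : nat, (N <= n)%N -> nc (y (Posz n)) <= K.

Lemma evbnd_cvg y (l : C) : (fun n : nat => y (Posz n)) @ \oo --> l -> evbnd y.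
Proof.
move=> /cvgC /(_ 1 ltr01) [N HN]; exists (nc l + 1), N => n /HN h.
have -> : y (Posz n) = (y (Posz n) - l) + l by ring.
apply: le_trans (ncD _ _) _; lra.
Qed.

Lemma evbnd_mul y z : evbnd y -> evbnd z -> evbnd (fun n => y n * z n).
Proof.
move=> [K1 [N1 H1]] [K2 [N2 H2]]; exists (K1 * K2), (maxn N1 N2) => n.
rewrite geq_max => /andP[h1 h2]; rewrite ncM.
apply: ler_pM; rewrite ?nc_ge0 //; [exact: H1| exact: H2].
Qed.

Lemma evbnd_shiftm1 y : evbnd y -> evbnd (fun j => y (j - 1)).
Proof.
move=> [K [N H]]; exists K, N.+1 => n hn.
have -> : Posz n - 1 = Posz (n - 1)%N by lia.
by apply: H; lia.
Qed.

Lemma evbnd_shift1 y : evbnd y -> evbnd (fun j => y (j + 1)).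
Proof.
move=> [K [N H]]; exists K, N => n hn.
have -> : Posz n + 1 = Posz (n + 1)%N by lia.
by apply: H; lia.
Qed.

Lemma summP_mul x y : summP x -> evbnd y -> summP (fun n => x n * y n).
Proof.
move=> hx [K [N H]]; apply: (@smallT_le _ _ (Num.max K 0) N) hx.
  by rewrite le_max lexx orbT.
move=> n hn /=; rewrite ncM mulrC; apply: ler_wpM2r; first exact: nc_ge0.
by rewrite le_max H.
Qed.

Lemma summP_mull x y : evbnd y -> summP x -> summP (fun n => y n * x n).
Proof.
move=> hy hx; have := summP_mul hx hy.
by apply: smallT_ext => n; rewrite mulrC.
Qed.

Lemma summP_add x y : summP x -> summP y -> summP (fun n => x n + y n).
Proof.
move=> hx hy; apply: (@smallT_le _ _ 1 0 ler01 _ (smallT_add hx hy)).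
by move=> n _; rewrite mul1r; exact: ncD.
Qed.

Lemma summP_opp x : summP x -> summP (fun n => - x n).
Proof. by apply: smallT_ext => n; rewrite ncN. Qed.

Lemma summP_shift1 x : summP x -> summP (fun n => x (n + 1)).
Proof.
move=> /(smallT_shift 1); apply: smallT_ext => n /=.
by congr (nc (x _)); lia.
Qed.

Lemma summP_cvg x : summP x -> evbnd x.
Proof. by move/summP_cvg0/evbnd_cvg. Qed.

Lemma sq_small (y : nat -> C) : (fun n : nat => (n%:R ^+ 2 : C) * y n) @ \oo --> (0 : C) ->
  smallT (fun n => nc (y n)).
Proof.
move/cvgC => h; have [N0 HN0] := h (1/2) ltac:(lra).
have hb : forall n, (maxn N0 1 <= n)%N -> nc (y n) <= n%:R^-1 - n.+1%:R^-1.
  move=> n; rewrite geq_max => /andP[hn1 hn2].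
  have := HN0 n hn1; rewrite subr0 expr2 !ncM nc_nat => hlt.
  have npos : (1 <= n%:R :> R) by rewrite ler1n.
  have a0 := nc_ge0 (y n).
  have -> : n%:R^-1 - n.+1%:R^-1 = 1 / (n%:R * (n%:R + 1)) :> R.
    rewrite -natr1; field; apply/andP; split; rewrite gt_eqF //; lra.
  rewrite ler_pdivlMr; last by apply: mulr_gt0; lra.
  have := mulr_ge0 (mulr_ge0 a0 (_ : 0 <= n%:R :> R)) (_ : 0 <= n%:R - 1 :> R).
  move=> /(_ ltac:(lra) ltac:(lra)); nra.
have ht : forall n L, (maxn N0 1 <= n)%N ->
    \sum_(k < L) nc (y (n + k)%N) <= n%:R^-1 - (n + L)%N%:R^-1.
  move=> n L hn; elim: L => [|L IH]; first by rewrite big_ord0 addn0 subrr.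
  rewrite big_ord_recr /=.
  have := hb (n + L)%N (leq_trans hn (leq_addr _ _)); rewrite addnS => hh.
  by apply: le_trans (lerD IH hh) _; rewrite addrA subrK.
move=> e e0.
exists (maxn (maxn N0 1) (Num.bound (e^-1))) => n L; rewrite geq_max => /andP[hn1 hn2].
apply: le_trans (ht n L hn1) _.
have : 0 <= (n + L)%N%:R^-1 :> R by rewrite invr_ge0 ler0n.
suff : n%:R^-1 <= e by lra.
have hbd : e^-1 < (Num.bound e^-1)%:R by apply: archi_boundP; rewrite invr_ge0 ltW.
have hn : (Num.bound e^-1)%:R <= n%:R :> R by rewrite ler_nat.
rewrite -[e]invrK lef_pV2 ?posrE ?invr_gt0 //; first lra.
rewrite ltr0n; move: hn1; rewrite geq_max => /andP[_]; lia.
Qed.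

Lemma rapid_summ x : rapid_decay x -> summP x /\ summP (fun j => x (- j)).
Proof.
move=> h; have [h1 h2] := h 2%N; split.
- exact: (sq_small h1).
- exact: (sq_small h2).
Qed.

Lemma nc_sum (L : nat) (F : nat -> C) : nc (\sum_(k < L) F k) <= \sum_(k < L) nc (F k).
Proof.
elim: L => [|L IH]; first by rewrite !big_ord0 nc0.
rewrite !big_ord_recr /=; apply: le_trans (ncD _ _) _; exact: lerD.
Qed.

Lemma sum_ge_term (L m : nat) (F : nat -> R) : (forall k, 0 <= F k) -> (m < L)%N ->
  F m <= \sum_(k < L) F k.
Proof.
move=> h hm; rewrite (bigD1 (Ordinal hm)) //= lerDl.
by apply: sumr_ge0 => k _.
Qed.

Lemma int_cases (N : nat) (n : int) :
  (exists k : nat, n = Posz N - Posz k) \/ (exists m : nat, n = Posz m /\ (N <= m)%N).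
Proof.
case: n => [a|b].
- case: (leqP N a) => h; first by right; exists a.
  by left; exists (N - a)%N; lia.
- by left; exists (N + b.+1)%N; lia.
Qed.

Lemma uniqU (a b t s : int -> C) : summP a -> summP b ->
  (forall n, t n = t (n + 1) + a n * s (n + 1)) ->
  (forall n, s n = b n * t (n + 1) + s (n + 1)) ->
  (fun n : nat => t (Posz n)) @ \oo --> (0 : C) ->
  (fun n : nat => s (Posz n)) @ \oo --> (0 : C) ->
  forall n, t n = 0 /\ s n = 0.
Proof.
move=> ha hb htr hsr /cvgC ht0 /cvgC hs0.
have e1 : forall m : nat, Posz m + 1 = Posz m.+1 by move=> m; lia.
have htr' : forall m : nat, t m = t m.+1 + a m * s m.+1 by move=> m; rewrite htr e1.
have hsr' : forall m : nat, s m = b m * t m.+1 + s m.+1 by move=> m; rewrite hsr e1.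
pose w := fun m : nat => nc (t m) + nc (s m).
have w0 : forall m, 0 <= w m by move=> m; rewrite /w; have := nc_ge0 (t m); have := nc_ge0 (s m); lra.
have wc : forall e, 0 < e -> exists M, forall m, (M <= m)%N -> w m < e.
  move=> e e0; have [M1 H1] := ht0 (e/2) ltac:(lra); have [M2 H2] := hs0 (e/2) ltac:(lra).
  exists (maxn M1 M2) => m; rewrite geq_max => /andP[m1 m2].
  have := H1 m m1; have := H2 m m2; rewrite !subr0 /w; lra.
have hab := smallT_add ha hb.
have [N HN] := hab (1/2) ltac:(lra).
have tel : forall (n L : nat),
    t n = t (n + L)%N + \sum_(k < L) a (n + k)%N * s (n + k).+1 /\
    s n = s (n + L)%N + \sum_(k < L) b (n + k)%N * t (n + k).+1.
  move=> n; elim => [|L [IH1 IH2]]; first by rewrite !big_ord0 !addr0 addn0.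
  rewrite !big_ord_recr /= addnS; split.
  - by rewrite IH1 htr' addrA [t _ + _ + _]addrAC -!addrA.
  - by rewrite IH2 hsr' [b _ * _ + _]addrC -!addrA [_ + b _ * _]addrC.
have [M1 HM1] := wc 1 ltr01.
pose B := 1 + \sum_(k < M1) w k.
have hB : forall m, w m <= B.
  move=> m; case: (ltnP m M1) => hm.
  - have := sum_ge_term w0 hm; rewrite /B; lra.
  - have := HM1 m hm; have : 0 <= \sum_(k < M1) w k by apply: sumr_ge0 => k _.
    rewrite /B; lra.
have B0 : 0 < B.
  have : 0 <= \sum_(k < M1) w k by apply: sumr_ge0 => k _.
  rewrite /B; lra.
have claim : forall j : nat, forall m, (N <= m)%N -> w m <= B / 2 ^+ j.
  elim => [|j IH] m hm; first by rewrite expr0 divr1.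
  apply: ler_eps => e e0; have [M HM] := wc e e0.
  have [T1 T2] := tel m M.
  have hw : w (m + M)%N < e by apply: HM; exact: leq_addl.
  have hs : \sum_(k < M) (nc (a (m + k)%N) + nc (b (m + k)%N)) <= 1/2 := HN m M hm.
  have hsum : nc (\sum_(k < M) a (m + k)%N * s (m + k).+1) +
              nc (\sum_(k < M) b (m + k)%N * t (m + k).+1) <=
              \sum_(k < M) (nc (a (m + k)%N) + nc (b (m + k)%N)) * (B / 2 ^+ j).
    apply: le_trans (lerD (nc_sum M (fun k => a (m + k)%N * s (m + k).+1)) (nc_sum M (fun k => b (m + k)%N * t (m + k).+1))) _.
    rewrite -big_split /=; apply: ler_sum => k _; rewrite !ncM mulrDl.
    have hk : (N <= (m + k).+1)%N by apply: leq_trans hm _; lia.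
    have := IH _ hk; rewrite /w => hI.
    have := nc_ge0 (a (m + k)%N); have := nc_ge0 (b (m + k)%N).
    have := nc_ge0 (t (m + k).+1); have := nc_ge0 (s (m + k).+1).
    nra.
  rewrite -mulr_suml in hsum.
  have hB2 : 0 <= B / 2 ^+ j by apply: divr_ge0; [lra | apply: exprn_ge0; lra].
  have := ler_wpM2r hB2 hs => hs2.
  have -> : B / 2 ^+ j.+1 = 1 / 2 * (B / 2 ^+ j) by rewrite exprS; field; apply: expf_neq0; lra.
  rewrite /w; rewrite {1}T1 {1}T2.
  apply: le_trans (lerD (ncD _ _) (ncD _ _)) _.
  move: hw; rewrite /w => hw; lra.
have wz : forall m, (N <= m)%N -> w m = 0.
  move=> m hm; apply/eqP; rewrite eq_le w0 andbT; apply/negP => /negP; rewrite -ltNge => wpos.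
  pose j := Num.bound (B / w m).
  have hj : B / w m < j%:R by apply: archi_boundP; apply: divr_ge0; lra.
  have hj2 : (j%:R : R) <= 2 ^+ j.
    rewrite -natrX ler_nat; apply: ltnW; exact: ltn_expl.
  have := claim j m hm.
  rewrite ler_pdivlMr; last by apply: exprn_gt0; lra.
  move: hj; rewrite ltr_pdivrMr // => hj.
  nra.
have tz : forall m, (N <= m)%N -> t m = 0 /\ s m = 0.
  move=> m /wz; rewrite /w => h0.
  have := nc_ge0 (t m); have := nc_ge0 (s m) => hs hth.
  have h1 : nc (t m) = 0 by lra.
  have h2 : nc (s m) = 0 by lra.
  by split; apply/eqP; rewrite -nc_eq0; apply/eqP.
have down : forall k : nat, t (Posz N - Posz k) = 0 /\ s (Posz N - Posz k) = 0.
  elim => [|k [IH1 IH2]]; first by rewrite subr0; exact: tz.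
  have ek : Posz N - Posz k.+1 + 1 = Posz N - Posz k by lia.
  split; first by rewrite htr ek IH1 IH2 mulr0 addr0.
  by rewrite hsr ek IH1 IH2 mulr0 addr0.
move=> n; case: (int_cases N n) => [[k ->]|[m [-> hm]]]; first exact: down.
exact: tz.
Qed.

Lemma prodC_recr (F : nat -> C) L : \prod_(k < L.+1) F k = (\prod_(k < L) F k) * F L.
Proof. exact: big_ord_recr. Qed.
Lemma prodR_recr (F : nat -> R) L : \prod_(k < L.+1) F k = (\prod_(k < L) F k) * F L.
Proof. exact: big_ord_recr. Qed.
Lemma sumR_recr (F : nat -> R) L : \sum_(k < L.+1) F k = (\sum_(k < L) F k) + F L.
Proof. exact: big_ord_recr. Qed.
Lemma sumC_recr (F : nat -> C) L : \sum_(k < L.+1) F k = (\sum_(k < L) F k) + F L.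
Proof. exact: big_ord_recr. Qed.

Lemma prodB1 (t : nat -> R) (L : nat) : (forall k, 0 <= t k) ->
  \sum_(k < L) t k <= 1/2 -> \prod_(k < L) (1 + t k) <= 1 + 2 * \sum_(k < L) t k.
Proof.
move=> t0; elim: L => [|L IH]; first by rewrite !big_ord0 mulr0 addr0.
rewrite !big_ord_recr /= => hs.
have hL : \sum_(k < L) t k <= 1/2 by have := t0 L; lra.
have := IH hL => hP.
have P0 : 0 <= \prod_(k < L) (1 + t k).
  by apply: prodr_ge0 => k _; have := t0 k; lra.
have := t0 L; have : 0 <= \sum_(k < L) t k by apply: sumr_ge0.
nra.
Qed.

Lemma prodB2 (c : nat -> C) (L : nat) :
  nc (\prod_(k < L) (1 + c k) - 1) <= \prod_(k < L) (1 + nc (c k)) - 1.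
Proof.
elim: L => [|L IH]; first by rewrite !big_ord0 subrr nc0 subrr.
rewrite (prodC_recr (fun k => 1 + c k)) (prodR_recr (fun k => 1 + nc (c k))).
set P := \prod_(k < L) (1 + c k) in IH *; set Q := \prod_(k < L) (1 + nc (c k)) in IH *.
have -> : P * (1 + c L) - 1 = (P - 1) * (1 + c L) + c L by ring.
apply: le_trans (ncD _ _) _; rewrite ncM.
have h1 : nc (1 + c L) <= 1 + nc (c L) by apply: le_trans (ncD _ _) _; rewrite nc1.
have := nc_ge0 (P - 1); have := nc_ge0 (1 + c L); have := nc_ge0 (c L).
nra.
Qed.

Definition pp (g : nat -> C) (N : nat) := \prod_(k < N) g k.

Lemma prod_tail (g : nat -> C) (n L : nat) (e : R) : e <= 1/2 ->
  \sum_(k < L) nc (g (n + k)%N - 1) <= e -> nc (pp g (n + L) - pp g n) <= nc (pp g n) * (2 * e).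
Proof.
move=> e2 hs.
have -> : pp g (n + L) = pp g n * \prod_(k < L) (1 + (g (n + k)%N - 1)).
  rewrite /pp big_split_ord /=; congr (_ * _); apply: eq_bigr => k _.
  by rewrite addrC subrK.
rewrite -{2}[pp g n]mulr1 -mulrBr ncM; apply: ler_wpM2l; first exact: nc_ge0.
apply: le_trans (prodB2 (fun k => g (n + k)%N - 1) L) _.
have := prodB1 (fun k => nc_ge0 (g (n + k)%N - 1)) (le_trans hs e2).
lra.
Qed.

Lemma pp_neq0 (g : nat -> C) N : (forall k, g k != 0) -> pp g N != 0.
Proof. by move=> h; rewrite /pp; apply/prodf_neq0 => k _. Qed.

Lemma CP (g : nat -> C) : (forall k, g k != 0) -> smallT (fun k => nc (g k - 1)) ->
  exists l : C, l != 0 /\ pp g @ \oo --> l.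
Proof.
move=> gnz hs.
have [N1 HN1] := hs (1/4) ltac:(lra).
have hK : forall n, (N1 <= n)%N -> nc (pp g n) <= 2 * nc (pp g N1).
  move=> n hn; have -> : n = (N1 + (n - N1))%N by lia.
  have h := @prod_tail g N1 (n - N1)%N (1/4) ltac:(lra) (HN1 N1 (n - N1)%N (leqnn _)).
  have -> : pp g (N1 + (n - N1)) = (pp g (N1 + (n - N1)) - pp g N1) + pp g N1 by ring.
  apply: le_trans (ncD _ _) _; have := nc_ge0 (pp g N1); lra.
set K := 2 * nc (pp g N1).
have K0 : 0 <= K by rewrite /K; have := nc_ge0 (pp g N1); lra.
have [l hl] : exists l : C, pp g @ \oo --> l.
  apply: cauchyC => e e0.
  pose e' := Num.min (1/4) (e / (4 * K + 1)).
  have e'0 : 0 < e' by rewrite lt_min; apply/andP; split; [lra | apply: divr_gt0; lra].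
  have e'1 : e' <= 1/4 by rewrite ge_min lexx.
  have e'2 : e' * (4 * K + 1) <= e.
    rewrite -ler_pdivlMr; last by lra.
    by rewrite ge_min lexx orbT.
  have [N2 HN2] := hs e' e'0.
  have key : forall n L, (maxn N1 N2 <= n)%N -> nc (pp g (n + L) - pp g n) < e.
    move=> n L; rewrite geq_max => /andP[h1 h2].
    have h := @prod_tail g n L e' ltac:(lra) (HN2 n L h2).
    have := hK n h1 => hk; rewrite -/K in hk.
    have := nc_ge0 (pp g n) => hp.
    apply: le_lt_trans h _.
    have : nc (pp g n) * (2 * e') <= K * (2 * e') by apply: ler_wpM2r; lra.
    nra.
  exists (maxn N1 N2) => n m hn hm.
  case: (leqP n m) => hnm.
  - have -> : m = (n + (m - n))%N by lia.
    by rewrite ncB; apply: key.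
  - have -> : n = (m + (n - m))%N by lia.
    by apply: key.
exists l; split => //.
apply/negP => /eqP l0; subst l.
have : nc (0 - pp g N1) <= nc (pp g N1) / 2.
  apply: (cvg_le hl); exists N1 => n hn.
  have -> : n = (N1 + (n - N1))%N by lia.
  have := @prod_tail g N1 (n - N1)%N (1/4) ltac:(lra) (HN1 N1 (n - N1)%N (leqnn _)).
  lra.
rewrite sub0r ncN => h.
have : nc (pp g N1) = 0 by have := nc_ge0 (pp g N1); lra.
by move/eqP; rewrite nc_eq0; apply/negP; exact: pp_neq0.
Qed.

Lemma cM (u v : nat -> C) (a b : C) : u @ \oo --> a -> v @ \oo --> b ->
  (fun n => u n * v n) @ \oo --> a * b.
Proof. by move=> hu hv; have := cvgM hu hv; move=> /(_ eventually_filter). Qed.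
Lemma cD (u v : nat -> C) (a b : C) : u @ \oo --> a -> v @ \oo --> b ->
  (fun n => u n + v n) @ \oo --> a + b.
Proof. by move=> hu hv; have := cvgD hu hv; move=> /(_ eventually_filter). Qed.
Lemma cB (u v : nat -> C) (a b : C) : u @ \oo --> a -> v @ \oo --> b ->
  (fun n => u n - v n) @ \oo --> a - b.
Proof. by move=> hu hv; have := cvgB hu hv; move=> /(_ eventually_filter). Qed.
Lemma cV (u : nat -> C) (a : C) : a != 0 -> u @ \oo --> a ->
  (fun n => (u n)^-1) @ \oo --> a^-1.
Proof. by move=> a0 hu; have := cvgV a0 hu; move=> /(_ eventually_filter). Qed.
Lemma cC (a : C) : (fun _ : nat => a) @ \oo --> a.
Proof. exact: (@cvg_cst _ a _ _ eventually_filter). Qed.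
Lemma cE (u v : nat -> C) (a : C) : u @ \oo --> a -> (forall n, u n = v n) -> v @ \oo --> a.
Proof. by move=> hu h; have -> : v = u by apply: funext => n; rewrite h. Qed.
Lemma cL (u : nat -> C) (a b : C) : a = b -> u @ \oo --> a -> u @ \oo --> b.
Proof. by move=> ->. Qed.
Lemma cS (u : nat -> C) (a : C) : u @ \oo --> a -> (fun n => u n.+1) @ \oo --> a.
Proof. by move=> h; rewrite -(cvg_shiftS u) in h. Qed.

Definition Pn (f : int -> C) (n : int) : C :=
  lim ((fun N : nat => \prod_(0 <= k < N) f (n - Posz k)) @ \oo).
Definition Pinf (f : int -> C) : C :=
  lim ((fun N : nat => \prod_(0 <= k < (2 * N).+1) f (Posz k - Posz N)) @ \oo).

Section Prod.
Variable f : int -> C.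
Hypothesis fnz : forall j, f j != 0.
Hypothesis hP : summP (fun j => f j - 1).
Hypothesis hN : summP (fun j => f (- j) - 1).

Lemma bigmk (F : nat -> C) N : \prod_(0 <= k < N) F k = pp F N.
Proof. by rewrite big_mkord. Qed.

End Prod.

Lemma limE (u : nat -> C) (l : C) : u @ \oo --> l -> lim (u @ \oo) = l.
Proof.
move=> h; have hs : hausdorff_space C by exact: norm_hausdorff.
exact: (cvg_lim hs h).
Qed.

Section Prod2.
Variable f : int -> C.
Hypothesis fnz : forall j, f j != 0.
Hypothesis hP : summP (fun j => f j - 1).
Hypothesis hN : summP (fun j => f (- j) - 1).

Lemma Pn_prop n : Pn f n != 0 /\
  (fun N : nat => \prod_(0 <= k < N) f (n - Posz k)) @ \oo --> Pn f n.
Proof using fnz hP hN.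
have [l [l0 hl]] : exists l : C, l != 0 /\ pp (fun k => f (n - Posz k)) @ \oo --> l.
  apply: CP => //; have := summP_trans hN (- n).
  by apply: smallT_ext => k /=; congr (nc (f _ - 1)); lia.
have hl' : (fun N : nat => \prod_(0 <= k < N) f (n - Posz k)) @ \oo --> l.
  by refine (cE hl _) => N /=; rewrite bigmk.
by rewrite /Pn (limE hl').
Qed.

Lemma Pn_cvg n : (fun N : nat => \prod_(0 <= k < N) f (n - Posz k)) @ \oo --> Pn f n.
Proof using fnz hP hN. by case: (Pn_prop n). Qed.
Lemma Pn_neq0 n : Pn f n != 0.
Proof using fnz hP hN. by case: (Pn_prop n). Qed.

Lemma Pn_rec n : Pn f n = f n * Pn f (n - 1).
Proof using fnz hP hN.
have h1 := cS (Pn_cvg (n:=n)).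
have h2 : (fun N : nat => \prod_(0 <= k < N.+1) f (n - Posz k)) @ \oo --> f n * Pn f (n - 1).
  refine (cE (cM (cC (a:=f n)) (Pn_cvg (n:=n - 1))) _) => N /=.
  rewrite big_nat_recl // subr0; congr (_ * _); apply: eq_bigr => k _.
  by congr f; lia.
exact: (cvg_uniq h1 h2).
Qed.

Lemma Q_prop : exists Ql : C, Ql != 0 /\ pp (fun k => f (1 + Posz k)) @ \oo --> Ql.
Proof using fnz hP hN.
apply: CP => //; have := summP_trans hP 1.
by apply: smallT_ext.
Qed.

Lemma Sdecomp (N : nat) : \prod_(0 <= k < (2 * N).+1) f (Posz k - Posz N) =
  (\prod_(0 <= k < N.+1) f (0 - Posz k)) * pp (fun k => f (1 + Posz k)) N.
Proof using fnz hP hN.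
rewrite (@big_cat_nat _ _ _ N.+1) //=; last by rewrite ltnS; lia.
congr (_ * _).
- rewrite big_nat_rev /=; apply: eq_big_nat => i /andP[_ hi].
  by congr f; lia.
- rewrite -bigmk -{1}[N.+1]add0n big_addn.
  have -> : ((2 * N).+1 - N.+1 = N)%N by lia.
  by apply: eq_bigr => i _; congr f; lia.
Qed.

Lemma Pinf_prop : exists Ql : C, Ql != 0 /\ pp (fun k => f (1 + Posz k)) @ \oo --> Ql /\
  Pinf f = Pn f 0 * Ql.
Proof using fnz hP hN.
have [Ql [Q0 hQ]] := Q_prop; exists Ql; split => //; split => //.
rewrite /Pinf; apply: limE.
refine (cE (cM (cS (Pn_cvg (n:=0))) hQ) _) => N /=.
by rewrite Sdecomp.
Qed.

Lemma Pinf_neq0 : Pinf f != 0.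
Proof using fnz hP hN.
have [Ql [Q0 [_ ->]]] := Pinf_prop.
by rewrite mulf_neq0 // Pn_neq0.
Qed.

Lemma pp_recr (F : nat -> C) L : pp F L.+1 = pp F L * F L.
Proof using fnz hP hN. exact: big_ord_recr. Qed.

Lemma Pn_nat (m : nat) : Pn f (Posz m) = Pn f 0 * pp (fun k => f (1 + Posz k)) m.
Proof using fnz hP hN.
elim: m => [|m IH]; first by rewrite /pp big_ord0 mulr1.
rewrite Pn_rec (pp_recr (fun k => f (1 + Posz k)) m).
have -> : Posz m.+1 - 1 = Posz m by lia.
rewrite IH; have -> : Posz m.+1 = 1 + Posz m by lia.
ring.
Qed.

Lemma Pn_lim : (fun m : nat => Pn f (Posz m)) @ \oo --> Pinf f.
Proof using fnz hP hN.
have [Ql [Q0 [hQ ->]]] := Pinf_prop.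
by refine (cE (cM (cC (a:=Pn f 0)) hQ) _) => m /=; rewrite Pn_nat.
Qed.

Lemma f_lim : (fun m : nat => f (Posz m)) @ \oo --> (1 : C).
Proof using fnz hP hN.
have h := summP_cvg0 hP.
refine (cL (add0r 1) _); refine (cE (cD h (cC (a:=1))) _) => m /=.
by rewrite subrK.
Qed.

Lemma Pn_limm1 : (fun m : nat => Pn f (Posz m - 1)) @ \oo --> Pinf f.
Proof using fnz hP hN.
refine (cL (mulr1 (Pinf f)) _); rewrite -[X in _ * X]invr1.
refine (cE (cM Pn_lim (cV (oner_neq0 _) f_lim)) _) => m /=.
by rewrite Pn_rec mulrAC divff // mul1r.
Qed.
End Prod2.

Lemma sumC_split (F : nat -> C) N L : \sum_(k < N + L) F k = \sum_(k < N) F k + \sum_(k < L) F (N + k)%N.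
Proof. by rewrite big_split_ord. Qed.

Section Tail.
Variable x : int -> C.
Hypothesis hx : summP x.

Lemma tail_cvg n : (fun N : nat => \sum_(0 <= k < N) x (n + Posz k)) @ \oo --> tailsum x n.
Proof using hx.
have hs := summP_trans hx n.
have [l hl] : exists l : C, (fun N : nat => \sum_(0 <= k < N) x (n + Posz k)) @ \oo --> l.
  apply: cauchyC => e e0; have [N HN] := hs (e/2) ltac:(lra).
  have key : forall a L, (N <= a)%N ->
      nc (\sum_(0 <= k < a + L) x (n + Posz k) - \sum_(0 <= k < a) x (n + Posz k)) < e.
    move=> a L ha; rewrite !big_mkord (sumC_split (fun k => x (n + Posz k)) a L) addrC addKr.
    apply: le_lt_trans (nc_sum L (fun k => x (n + Posz (a + k)))) _.
    have := HN a L ha; lra.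
  exists N => a b ha hb; case: (leqP a b) => hab.
  - have -> : b = (a + (b - a))%N by lia.
    by rewrite ncB; apply: key.
  - have -> : a = (b + (a - b))%N by lia.
    by apply: key.
by rewrite /tailsum (limE hl).
Qed.

Lemma tail_rec n : tailsum x n = x n + tailsum x (n + 1).
Proof using hx.
have h1 := cS (tail_cvg (n:=n)).
have h2 : (fun N : nat => \sum_(0 <= k < N.+1) x (n + Posz k)) @ \oo --> x n + tailsum x (n + 1).
  refine (cE (cD (cC (a:=x n)) (tail_cvg (n:=n + 1))) _) => N /=.
  rewrite big_nat_recl // addr0; congr (_ + _); apply: eq_bigr => k _.
  by congr x; lia.
exact: (cvg_uniq h1 h2).
Qed.

Lemma tail_lim0 : (fun m : nat => tailsum x (Posz m)) @ \oo --> (0 : C).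
Proof using hx.
apply/cvgC => e e0; have [N HN] := @hx (e/2) ltac:(lra).
exists N => m hm; rewrite subr0.
have : nc (tailsum x (Posz m) - 0) <= e / 2.
  apply: (cvg_le (tail_cvg (n:=Posz m))); exists 0%N => L _.
  rewrite subr0 big_mkord.
  apply: le_trans (nc_sum L (fun k => x (Posz m + Posz k))) _.
  have := HN m L hm.
  by rewrite (eq_bigr (fun k : 'I_L => nc (x (Posz m + Posz k)))).
rewrite subr0; lra.
Qed.

Lemma tail_lim0S : (fun m : nat => tailsum x (Posz m + 1)) @ \oo --> (0 : C).
Proof using hx.
by refine (cE (cS tail_lim0) _) => m /=; congr (tailsum x _); lia.
Qed.
End Tail.

Lemma top_col2 (a b : C) : top (col2 a b) = a.
Proof. by rewrite /top /col2 mxE. Qed.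
Lemma bot_col2 (a b : C) : bot (col2 a b) = b.
Proof. by rewrite /bot /col2 mxE. Qed.

Lemma cV2_ext (v w : 'cV[C]_2) : top v = top w -> bot v = bot w -> v = w.
Proof.
move=> ht hb; apply/matrixP => i j; rewrite [j]ord1.
case: i => [[|[|i]]] hi //.
- by have -> : Ordinal hi = ord0 by apply: val_inj.
- by have -> : Ordinal hi = ord_max by apply: val_inj.
Qed.

Lemma top_mul (a b c d : C) (v : 'cV[C]_2) : top (mx22 a b c d *m v) = a * top v + b * bot v.
Proof.
rewrite /top /bot /mx22 mxE !big_ord_recl big_ord0 addr0 !mxE /=.
by congr (_ * v _ _ + _ * v _ _); apply: val_inj.
Qed.
Lemma bot_mul (a b c d : C) (v : 'cV[C]_2) : bot (mx22 a b c d *m v) = c * top v + d * bot v.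
Proof.
rewrite /top /bot /mx22 mxE !big_ord_recl big_ord0 addr0 !mxE /=.
by congr (_ * v _ _ + _ * v _ _); apply: val_inj.
Qed.

Definition rec2 (a b : int -> C) (psi : int -> 'cV[C]_2) :=
  forall n, top (psi n) = top (psi (n + 1)) + a n * bot (psi (n + 1)) /\
            bot (psi n) = b n * top (psi (n + 1)) + bot (psi (n + 1)).

Lemma solves_mx22 (A B Cc Dd a b : int -> C) (psi : int -> 'cV[C]_2) :
  (forall n, A n = 1) -> (forall n, B n = a n) -> (forall n, Cc n = b n) -> (forall n, Dd n = 1) ->
  solves (fun n => mx22 (A n) (B n) (Cc n) (Dd n)) psi <-> rec2 a b psi.
Proof.
move=> hA hB hC hD; split.
- move=> h n; rewrite (h n) /= top_mul bot_mul hA hB hC hD.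
  by rewrite !mul1r.
- move=> h n; apply: cV2_ext; rewrite /= ?top_mul ?bot_mul ?hA ?hB ?hC ?hD !mul1r.
  + by case: (h n).
  + by case: (h n).
Qed.

Lemma solvesU (a b : int -> C) psi : solves (Umat a b 1) psi <-> rec2 a b psi.
Proof.
by apply: solves_mx22 => n; rewrite ?invr1 ?mul1r.
Qed.

Lemma solvesQ (q r : int -> C) psi : solves (Qmat q r 1) psi <-> rec2 (fun _ => 0) r psi.
Proof.
by apply: solves_mx22 => n; rewrite ?invr1 ?subrr ?mul0r ?mul1r ?addr0.
Qed.

Lemma jost_psi1 M (psi : int -> 'cV[C]_2) : is_jost_psi M 1 psi <->
  solves M psi /\ (fun n : nat => top (psi (Posz n))) @ \oo --> (0 : C) /\
  (fun n : nat => bot (psi (Posz n))) @ \oo --> (1 : C).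
Proof.
rewrite /is_jost_psi.
have -> : (fun n : nat => bot (psi (Posz n)) * 1 ^ (- Posz n)) = (fun n : nat => bot (psi (Posz n))).
  by apply: funext => n; rewrite exp1rz mulr1.
by [].
Qed.

Lemma jost_psibar1 M (psi : int -> 'cV[C]_2) : is_jost_psibar M 1 psi <->
  solves M psi /\ (fun n : nat => top (psi (Posz n))) @ \oo --> (1 : C) /\
  (fun n : nat => bot (psi (Posz n))) @ \oo --> (0 : C).
Proof.
rewrite /is_jost_psibar.
have -> : (fun n : nat => top (psi (Posz n)) * 1 ^ (Posz n)) = (fun n : nat => top (psi (Posz n))).
  by apply: funext => n; rewrite exp1rz mulr1.
by [].
Qed.

Lemma jostU (a b : int -> C) (ha : summP a) (hb : summP b) (phi : int -> 'cV[C]_2) (t0 b0 : C) :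
  rec2 a b phi ->
  (fun n : nat => top (phi (Posz n))) @ \oo --> t0 ->
  (fun n : nat => bot (phi (Posz n))) @ \oo --> b0 ->
  forall psi, (rec2 a b psi /\ (fun n : nat => top (psi (Posz n))) @ \oo --> t0 /\
     (fun n : nat => bot (psi (Posz n))) @ \oo --> b0) <-> (forall n, psi n = phi n).
Proof.
move=> hphi hlt hlb psi; split.
- move=> [hpsi [ht' hb']] n.
  have R1 : forall n, top (psi n) - top (phi n) =
     (top (psi (n + 1)) - top (phi (n + 1))) + a n * (bot (psi (n + 1)) - bot (phi (n + 1))).
    move=> m; case: (hpsi m) => -> _; case: (hphi m) => -> _; ring.
  have R2 : forall n, bot (psi n) - bot (phi n) =
     b n * (top (psi (n + 1)) - top (phi (n + 1))) + (bot (psi (n + 1)) - bot (phi (n + 1))).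
    move=> m; case: (hpsi m) => _ ->; case: (hphi m) => _ ->; ring.
  have L1 := cL (subrr t0) (cB ht' hlt).
  have L2 := cL (subrr b0) (cB hb' hlb).
  have [h1 h2] := @uniqU a b (fun n => top (psi n) - top (phi n))
     (fun n => bot (psi n) - bot (phi n)) ha hb R1 R2 L1 L2 n.
  move: h1 h2 => /eqP h1 /eqP h2; rewrite subr_eq0 in h1; rewrite subr_eq0 in h2.
  by apply: cV2_ext; apply/eqP.
- move=> h; have -> : psi = phi by apply: funext.
  by [].
Qed.

Lemma summP_ext x y : (forall n, x n = y n) -> summP x -> summP y.
Proof. by move=> h; have -> : y = x by apply: funext => n; rewrite h. Qed.

Lemma summP0 : summP (fun _ => 0).
Proof.
move=> e e0; exists 0%N => n L _.
rewrite (eq_bigr (fun _ => 0)); last by move=> k _; rewrite nc0.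
by rewrite big1 // ltW.
Qed.

Lemma cN (u : nat -> C) (a : C) : u @ \oo --> a -> (fun n => - u n) @ \oo --> - a.
Proof. by move=> hu; have := cvgN hu; move=> /(_ eventually_filter). Qed.

Lemma cEL (u v : nat -> C) (a b : C) : u @ \oo --> a -> (forall n, u n = v n) -> a = b ->
  v @ \oo --> b.
Proof. by move=> hu h <-; exact: (cE hu h). Qed.

Lemma main_in (q r : int -> C)
  (hq : rapid_decay q) (hr : rapid_decay r)
  (hD : forall n : int, 1 - q n * r n != 0)
  (hE : forall n : int, 1 + q n * r (n + 1) != 0) :
  let D := Dn q r in let E := En q r in
  let Dinfty := Dinf q r in let Einfty := Einf q r in
  (forall psib, is_jost_psibar (Qmat q r 1) 1 psib <->
     (forall n, psib n = col2 1 (tailsum r n))) /\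
  (forall psi, is_jost_psi (Qmat q r 1) 1 psi <->
     (forall n, psi n = col2 0 1)) /\
  (forall psib, is_jost_psibar (Umat (u_pot q r) (v_pot q r) 1) 1 psib <->
     (forall n, psib n = col2 (E (n - 1) / Einfty) (- r n * D (n - 1) / Einfty))) /\
  (forall psi, is_jost_psi (Umat (u_pot q r) (v_pot q r) 1) 1 psi <->
     (forall n, psi n = col2 (E (n - 1) / Dinfty * tailsum q n)
                             (D (n - 1) / Dinfty * (1 - r n * tailsum q n)))) /\
  (forall psib, is_jost_psibar (Umat (p_pot q r) (s_pot q r) 1) 1 psib <->
     (forall n, psib n = col2 (E (n - 1) / Einfty * (1 + q n * tailsum r (n + 1)))
                              (D n / Einfty * tailsum r (n + 1)))) /\
  (forall psi, is_jost_psi (Umat (p_pot q r) (s_pot q r) 1) 1 psi <->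
     (forall n, psi n = col2 (q n * E (n - 1) / Dinfty) (D n / Dinfty))).
Proof.
cbv zeta.
have [hqP hqN] := rapid_summ hq.
have [hrP hrN] := rapid_summ hr.
pose fD := fun j => 1 - q j * r j.
pose fE := fun j => 1 + q j * r (j + 1).
have brP : evbnd r := summP_cvg hrP.
have brN : evbnd (fun j => r (- j)) := summP_cvg hrN.
have fDP : summP (fun j => fD j - 1).
  by apply: (summP_ext _ (summP_opp (summP_mul hqP brP))) => j; rewrite /fD; ring.
have fDN : summP (fun j => fD (- j) - 1).
  by apply: (summP_ext _ (summP_opp (summP_mul hqN brN))) => j; rewrite /fD; ring.
have fEP : summP (fun j => fE j - 1).
  by apply: (summP_ext _ (summP_mul hqP (evbnd_shift1 brP))) => j; rewrite /fE; ring.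
have fEN : summP (fun j => fE (- j) - 1).
  apply: (summP_ext _ (summP_mul hqN (evbnd_shiftm1 brN))) => j; rewrite /fE /=.
  have -> : - (j - 1) = - j + 1 by ring.
  ring.
have fDnz : forall j, fD j != 0 := hD.
have fEnz : forall j, fE j != 0 := hE.
have Drec : forall n, Dn q r n = (1 - q n * r n) * Dn q r (n - 1) := Pn_rec fDnz fDP fDN.
have Erec : forall n, En q r n = (1 + q n * r (n + 1)) * En q r (n - 1) := Pn_rec fEnz fEP fEN.
have Dnz : forall n, Dn q r n != 0 := Pn_neq0 fDnz fDP fDN.
have Enz : forall n, En q r n != 0 := Pn_neq0 fEnz fEP fEN.
have Dinz : Dinf q r != 0 := Pinf_neq0 fDnz fDP fDN.
have Einz : Einf q r != 0 := Pinf_neq0 fEnz fEP fEN.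
have Dlim : (fun m : nat => Dn q r (Posz m)) @ \oo --> Dinf q r := Pn_lim fDnz fDP fDN.
have Elim : (fun m : nat => En q r (Posz m)) @ \oo --> Einf q r := Pn_lim fEnz fEP fEN.
have Dlim1 : (fun m : nat => Dn q r (Posz m - 1)) @ \oo --> Dinf q r := Pn_limm1 fDnz fDP fDN.
have Elim1 : (fun m : nat => En q r (Posz m - 1)) @ \oo --> Einf q r := Pn_limm1 fEnz fEP fEN.
have Tqrec : forall n, tailsum q n = q n + tailsum q (n + 1) := tail_rec hqP.
have Trrec : forall n, tailsum r n = r n + tailsum r (n + 1) := tail_rec hrP.
have Tq0 : (fun m : nat => tailsum q (Posz m)) @ \oo --> (0 : C) := tail_lim0 hqP.
have Tr0 : (fun m : nat => tailsum r (Posz m)) @ \oo --> (0 : C) := tail_lim0 hrP.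
have Tr0S : (fun m : nat => tailsum r (Posz m + 1)) @ \oo --> (0 : C) := tail_lim0S hrP.
have q0 : (fun m : nat => q (Posz m)) @ \oo --> (0 : C) := summP_cvg0 hqP.
have r0 : (fun m : nat => r (Posz m)) @ \oo --> (0 : C) := summP_cvg0 hrP.
have bEm1 : evbnd (fun n => En q r (n - 1)) := evbnd_cvg Elim1.
have bDm1 : evbnd (fun n => Dn q r (n - 1)) := evbnd_cvg Dlim1.
have bD : evbnd (fun n => Dn q r n) := evbnd_cvg Dlim.
have bDV : evbnd (fun n => (Dn q r n)^-1) := evbnd_cvg (cV Dinz Dlim).
have bEV : evbnd (fun n => (En q r n)^-1) := evbnd_cvg (cV Einz Elim).
have bDV1 : evbnd (fun n => (Dn q r (n + 1))^-1) := evbnd_shift1 bDV.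
have bq : evbnd q := summP_cvg hqP.
have bq1 : evbnd (fun n => q (n + 1)) := evbnd_shift1 bq.
have br1 : evbnd (fun n => r (n + 1)) := evbnd_shift1 brP.
have hq1 : summP (fun n => q (n + 1)) := summP_shift1 hqP.
have hr1 : summP (fun n => r (n + 1)) := summP_shift1 hrP.
have hu : summP (u_pot q r).
  apply: (summP_ext _ (summP_mul (summP_mul hqP bEm1) bDV)) => n.
  by rewrite /u_pot.
have hv : summP (v_pot q r).
  have h1 : summP (fun n => - r n + r (n + 1) - q n * r n * r (n + 1)).
    apply: summP_add (summP_add (summP_opp hrP) hr1) _.
    exact: (summP_opp (summP_mul (summP_mul hqP brP) br1)).
  apply: (summP_ext _ (summP_mul (summP_mul h1 bDm1) bEV)) => n.
  by rewrite /v_pot.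
have hp : summP (p_pot q r).
  have h1 : summP (fun n => q n - q (n + 1) - q n * q (n + 1) * r (n + 1)).
    apply: summP_add (summP_add hqP (summP_opp hq1)) _.
    exact: (summP_opp (summP_mul (summP_mul hqP bq1) br1)).
  apply: (summP_ext _ (summP_mul (summP_mul h1 bEm1) bDV1)) => n.
  by rewrite /p_pot.
have hs : summP (s_pot q r).
  apply: (summP_ext _ (summP_mul (summP_mul hr1 bD) bEV)) => n.
  by rewrite /s_pot.
have eUV : forall psi, solves (Umat (u_pot q r) (v_pot q r) 1) psi = rec2 (u_pot q r) (v_pot q r) psi.
  by move=> psi; apply: propext; exact: solvesU.
have ePS : forall psi, solves (Umat (p_pot q r) (s_pot q r) 1) psi = rec2 (p_pot q r) (s_pot q r) psi.
  by move=> psi; apply: propext; exact: solvesU.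
have eQ : forall psi, solves (Qmat q r 1) psi = rec2 (fun _ => 0) r psi.
  by move=> psi; apply: propext; exact: solvesQ.
have eJ : forall M psi, is_jost_psi M 1 psi = (solves M psi /\ (fun n : nat => top (psi (Posz n))) @ \oo --> (0 : C) /\
  (fun n : nat => bot (psi (Posz n))) @ \oo --> (1 : C)).
  by move=> M psi; apply: propext; exact: jost_psi1.
have eJb : forall M psi, is_jost_psibar M 1 psi = (solves M psi /\ (fun n : nat => top (psi (Posz n))) @ \oo --> (1 : C) /\
  (fun n : nat => bot (psi (Posz n))) @ \oo --> (0 : C)).
  by move=> M psi; apply: propext; exact: jost_psibar1.
split; [|split; [|split; [|split; [|split]]]].
-
  move=> psib; rewrite eJb eQ.
  have R1 : rec2 (fun _ => 0) r (fun n => col2 1 (tailsum r n)).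
    move=> n; rewrite !top_col2 !bot_col2 mul0r addr0; split => //.
    by rewrite mulr1; exact: Trrec.
  have L1 : (fun n : nat => top ((fun n => col2 1 (tailsum r n)) (Posz n))) @ \oo --> (1 : C).
    by refine (cE (cC (a:=1)) _) => n /=; rewrite top_col2.
  have L2 : (fun n : nat => bot ((fun n => col2 1 (tailsum r n)) (Posz n))) @ \oo --> (0 : C).
    by refine (cE Tr0 _) => n /=; rewrite bot_col2.
  exact: (jostU summP0 hrP R1 L1 L2 psib).
-
  move=> psi; rewrite eJ eQ.
  have R1 : rec2 (fun _ => 0) r (fun n => col2 0 1).
    by move=> n; rewrite !top_col2 !bot_col2 mul0r addr0 mulr0 add0r.
  have L1 : (fun n : nat => top ((fun n => col2 0 1) (Posz n))) @ \oo --> (0 : C).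
    by refine (cE (cC (a:=0)) _) => n /=; rewrite top_col2.
  have L2 : (fun n : nat => bot ((fun n => col2 0 1) (Posz n))) @ \oo --> (1 : C).
    by refine (cE (cC (a:=1)) _) => n /=; rewrite bot_col2.
  exact: (jostU summP0 hrP R1 L1 L2 psi).
-
  move=> psib; rewrite eJb eUV.
  pose phi := fun n => col2 (En q r (n - 1) / Einf q r) (- r n * Dn q r (n - 1) / Einf q r).
  have R1 : rec2 (u_pot q r) (v_pot q r) phi.
    move=> n; rewrite /phi !top_col2 !bot_col2 /u_pot /v_pot !addrK; split.
    + rewrite (Erec n); field.
      by rewrite Dnz Einz.
    + rewrite (Drec n); field.
      by rewrite Enz Einz.
  have L1 : (fun n : nat => top (phi (Posz n))) @ \oo --> (1 : C).
    refine (cEL (cM Elim1 (cC (a:=(Einf q r)^-1))) _ _) => [n|]; first by rewrite /phi top_col2.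
    by rewrite divff.
  have L2 : (fun n : nat => bot (phi (Posz n))) @ \oo --> (0 : C).
    refine (cEL (cM (cM (cN r0) Dlim1) (cC (a:=(Einf q r)^-1))) _ _) => [n|]; first by rewrite /phi bot_col2.
    by rewrite oppr0 !mul0r.
  exact: (jostU hu hv R1 L1 L2 psib).
-
  move=> psi; rewrite eJ eUV.
  pose phi := fun n => col2 (En q r (n - 1) / Dinf q r * tailsum q n)
                             (Dn q r (n - 1) / Dinf q r * (1 - r n * tailsum q n)).
  have R1 : rec2 (u_pot q r) (v_pot q r) phi.
    move=> n; rewrite /phi !top_col2 !bot_col2 /u_pot /v_pot !addrK; split.
    + rewrite (Erec n) (Tqrec n); field.
      by rewrite Dnz Dinz.
    + rewrite (Drec n) (Tqrec n); field.
      by rewrite Enz Dinz.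
  have L1 : (fun n : nat => top (phi (Posz n))) @ \oo --> (0 : C).
    refine (cEL (cM (cM Elim1 (cC (a:=(Dinf q r)^-1))) Tq0) _ _) => [n|]; first by rewrite /phi top_col2.
    by rewrite mulr0.
  have L2 : (fun n : nat => bot (phi (Posz n))) @ \oo --> (1 : C).
    refine (cEL (cM (cM Dlim1 (cC (a:=(Dinf q r)^-1))) (cB (cC (a:=1)) (cM r0 Tq0))) _ _) => [n|].
      by rewrite /phi bot_col2.
    by rewrite divff // mul0r subr0 mulr1.
  exact: (jostU hu hv R1 L1 L2 psi).
-
  move=> psib; rewrite eJb ePS.
  pose phi := fun n => col2 (En q r (n - 1) / Einf q r * (1 + q n * tailsum r (n + 1)))
                              (Dn q r n / Einf q r * tailsum r (n + 1)).
  have R1 : rec2 (p_pot q r) (s_pot q r) phi.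
    move=> n; rewrite /phi !top_col2 !bot_col2 /p_pot /s_pot; split.
    + rewrite !addrK (Erec n) (Trrec (n + 1)); field.
      by rewrite Dnz Einz.
    + rewrite (Drec (n + 1)) !addrK (Trrec (n + 1)); field.
      by rewrite Enz Einz.
  have L1 : (fun n : nat => top (phi (Posz n))) @ \oo --> (1 : C).
    refine (cEL (cM (cM Elim1 (cC (a:=(Einf q r)^-1))) (cD (cC (a:=1)) (cM q0 Tr0S))) _ _) => [n|].
      by rewrite /phi top_col2.
    by rewrite divff // mul0r addr0 mulr1.
  have L2 : (fun n : nat => bot (phi (Posz n))) @ \oo --> (0 : C).
    refine (cEL (cM (cM Dlim (cC (a:=(Einf q r)^-1))) Tr0S) _ _) => [n|]; first by rewrite /phi bot_col2.
    by rewrite mulr0.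
  exact: (jostU hp hs R1 L1 L2 psib).
-
  move=> psi; rewrite eJ ePS.
  pose phi := fun n => col2 (q n * En q r (n - 1) / Dinf q r) (Dn q r n / Dinf q r).
  have R1 : rec2 (p_pot q r) (s_pot q r) phi.
    move=> n; rewrite /phi !top_col2 !bot_col2 /p_pot /s_pot; split.
    + rewrite !addrK (Erec n); field.
      by rewrite Dnz Dinz.
    + rewrite (Drec (n + 1)) !addrK; field.
      by rewrite Enz Dinz.
  have L1 : (fun n : nat => top (phi (Posz n))) @ \oo --> (0 : C).
    refine (cEL (cM (cM q0 Elim1) (cC (a:=(Dinf q r)^-1))) _ _) => [n|]; first by rewrite /phi top_col2.
    by rewrite !mul0r.
  have L2 : (fun n : nat => bot (phi (Posz n))) @ \oo --> (1 : C).
    refine (cEL (cM Dlim (cC (a:=(Dinf q r)^-1))) _ _) => [n|]; first by rewrite /phi bot_col2.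
    by rewrite divff.
  exact: (jostU hp hs R1 L1 L2 psi).
Qed.
End S.

End Aux.

Theorem theorem3p7 (R : realType) (q r : int -> R[i])
  (hq : rapid_decay q) (hr : rapid_decay r)
  (hD : forall n : int, 1 - q n * r n != 0)
  (hE : forall n : int, 1 + q n * r (n + 1) != 0) :
  let D := Dn q r in let E := En q r in
  let Dinfty := Dinf q r in let Einfty := Einf q r in
  (* system (Q) *)
  (forall psib, is_jost_psibar (Qmat q r 1) 1 psib <->
     (forall n, psib n = col2 1 (tailsum r n))) /\
  (forall psi, is_jost_psi (Qmat q r 1) 1 psi <->
     (forall n, psi n = col2 0 1)) /\
  (* system (U) with potentials (u,v) *)
  (forall psib, is_jost_psibar (Umat (u_pot q r) (v_pot q r) 1) 1 psib <->
     (forall n, psib n = col2 (E (n - 1) / Einfty) (- r n * D (n - 1) / Einfty))) /\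
  (forall psi, is_jost_psi (Umat (u_pot q r) (v_pot q r) 1) 1 psi <->
     (forall n, psi n = col2 (E (n - 1) / Dinfty * tailsum q n)
                             (D (n - 1) / Dinfty * (1 - r n * tailsum q n)))) /\
  (* system (U) with potentials (p,s) *)
  (forall psib, is_jost_psibar (Umat (p_pot q r) (s_pot q r) 1) 1 psib <->
     (forall n, psib n = col2 (E (n - 1) / Einfty * (1 + q n * tailsum r (n + 1)))
                              (D n / Einfty * tailsum r (n + 1)))) /\
  (forall psi, is_jost_psi (Umat (p_pot q r) (s_pot q r) 1) 1 psi <->
     (forall n, psi n = col2 (q n * E (n - 1) / Dinfty) (D n / Dinfty))).
Proof.
exact: (@Aux.main_in R q r hq hr hD hE).
Qed.
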